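(* Let $F=\{f_i\}_{i=1}^N$ be a frame for an $n$-dimensional Hilbert space $\mathcal{H}_n$ with frame operator $S_F$. Let $L=\max\{\|f_i\|\,\|S_F^{-1}f_i\|:1\le i\le N\}$, $\eta_1=\{i:\|f_i\|\,\|S_F^{-1}f_i\|=L\}$, $\eta_2=\{1,\dots,N\}\setminus\eta_1$, and $H_j=\mathrm{span}\{f_i:i\in\eta_j\}$ for $j=1,2$. Assume (i) $H_1\cap H_2=\{0\}$; (ii) $\|f_i\|=c$ for all $i\in\eta_1$, for some constant $c>0$; (iii) the set $\{f_i:i\in\eta_2\}$ is linearly independent. Then for every $p>2$ the canonical dual frame $S_F^{-1}F=\{S_F^{-1}f_i\}_{i=1}^N$ is a $1$-erasure Frobenius-optimal dual of $F$, i.e. $S_F^{-1}F\in\zeta_{\mathfrak{F}}^{(1),p}(F)$.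
   Context: $F$ is a frame for $\mathcal{H}_n$ if there are $0<A'\le B'$ with $A'\|f\|^2\le\sum_i|\langle f,f_i\rangle|^2\le B'\|f\|^2$ for all $f$. Analysis operator $T_Ff=(\langle f,f_i\rangle)_{i=1}^N$, frame operator $S_F=T_F^*T_F$ (positive invertible). $G=\{g_i\}_{i=1}^N$ is a dual of $F$ if $f=\sum_i\langle f,f_i\rangle g_i$ for all $f\in\mathcal{H}_n$. For a dual $G$ and $p>1$, $\mathrm{AE}_{\mathfrak{F}}^{(1),p}(F,G)=\{\frac1N\sum_{D\in\mathcal{D}^{(1)}}\|T_G^*DT_F\|_{\mathfrak{F}}^p\}^{1/p}=\{\frac1N\sum_{i=1}^N(\|f_i\|\,\|g_i\|)^p\}^{1/p}$, where $\mathcal{D}^{(1)}$ is the set of $N\times N$ diagonal matrices with exactly one diagonal entry $1$ and the rest $0$, and $\|\cdot\|_{\mathfrak{F}}$ is the Frobenius norm. $\zeta_{\mathfrak{F}}^{(1),p}(F)$ is the set of duals $G$ of $F$ minimizing $\mathrm{AE}_{\mathfrak{F}}^{(1),p}(F,G)$ over all duals of $F$. *)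

(* Defs.v *)
(* R : realType (needed for real exponents p), the Hilbert
   space H_n is C^n with C := R[i] (complex numbers over R), vectors are
   row vectors 'rV[R[i]]_n with the standard inner product. *)
From HB Require Import structures.
From mathcomp Require Import all_boot all_order all_algebra.
From mathcomp Require Import all_classical all_reals all_analysis.
From mathcomp Require Import complex.
Set Implicit Arguments. Unset Strict Implicit. Unset Printing Implicit Defensive.
Import Order.TTheory GRing.Theory Num.Theory.
Local Open Scope ring_scope.

Section FrameDefs.
Variables (R : realType) (n N : nat).
Local Notation C := (R[i]).
Local Notation vec := 'rV[C]_n.

Definition abs2 (z : C) : R := complex.Re (z * z^*).

Definition inner (f g : vec) : C := \sum_(k < n) f 0 k * (g 0 k)^*.

Definition vnorm (f : vec) : R := Num.sqrt (complex.Re (inner f f)).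

Definition is_frame (F : 'I_N -> vec) : Prop :=
  exists A B : R, 0 < A /\ A <= B /\
    forall f : vec,
      A * vnorm f ^+ 2 <= \sum_(i < N) abs2 (inner f (F i)) /\
      \sum_(i < N) abs2 (inner f (F i)) <= B * vnorm f ^+ 2.

(* Frame operator S_F = T_F^* T_F, as the matrix acting on row vectors by
   right multiplication:  f *m frame_op F = \sum_i <f, f_i> f_i. *)
Definition frame_op (F : 'I_N -> vec) : 'M[C]_n :=
  \sum_(i < N) (map_mx (fun z : C => z^*) (F i))^T *m F i.

Definition canonical_dual (F : 'I_N -> vec) : 'I_N -> vec :=
  fun i => F i *m invmx (frame_op F).

Definition is_dual (F G : 'I_N -> vec) : Prop :=
  forall f : vec, f = \sum_(i < N) inner f (F i) *: G i.

Definition AE1p (p : R) (F G : 'I_N -> vec) : R :=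
  ((N%:R)^-1 * \sum_(i < N) (vnorm (F i) * vnorm (G i)) `^ p) `^ (p^-1).

Definition optimal_dual (p : R) (F G : 'I_N -> vec) : Prop :=
  is_dual F G /\ forall G' : 'I_N -> vec, is_dual F G' -> AE1p p F G <= AE1p p F G'.

Definition Lmax (F : 'I_N -> vec) : R :=
  \big[Num.max/0]_(i < N) (vnorm (F i) * vnorm (canonical_dual F i)).

Definition eta1 (F : 'I_N -> vec) : {set 'I_N} :=
  [set i | vnorm (F i) * vnorm (canonical_dual F i) == Lmax F].

Definition eta2 (F : 'I_N -> vec) : {set 'I_N} := ~: eta1 F.

Definition span_of (F : 'I_N -> vec) (eta : {set 'I_N}) : 'M[C]_n :=
  (\sum_(i in eta) <<F i>>)%MS.

Definition lin_indep_on (F : 'I_N -> vec) (eta : {set 'I_N}) : Prop :=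
  forall a : 'I_N -> C,
    \sum_(i in eta) a i *: F i = 0 -> forall i, i \in eta -> a i = 0.

End FrameDefs.

(* Main.v *)
Require Import Defs.
From HB Require Import structures.
From mathcomp Require Import all_boot all_order all_algebra.
From mathcomp Require Import all_classical all_reals all_analysis.
From mathcomp Require Import complex.
From mathcomp Require Import ring lra.
Import Order.TTheory GRing.Theory Num.Theory.
Local Open Scope ring_scope.
Set Implicit Arguments. Unset Strict Implicit. Unset Printing Implicit Defensive.

Section Aux.
Variables (R : realType) (n : nat).
Local Notation C := (R[i]).
Local Notation vec := 'rV[C]_n.

Definition adj {m k} (A : 'M[C]_(m,k)) : 'M[C]_(k,m) :=
  (map_mx (fun z : C => z^*) A)^T.

Lemma ReD (x y : C) : complex.Re (x + y) = complex.Re x + complex.Re y.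
Proof. by case: x; case: y. Qed.

Lemma Re_sum I (r : seq I) (P : pred I) (f : I -> C) :
  complex.Re (\sum_(i <- r | P i) f i) = \sum_(i <- r | P i) complex.Re (f i).
Proof. exact: (big_morph _ ReD). Qed.

Lemma ReN (x : C) : complex.Re (- x) = - complex.Re x.
Proof. by case: x. Qed.

Lemma Re_conj (x : C) : complex.Re (x^*) = complex.Re x.
Proof. by case: x. Qed.

Lemma ReJ (z : C) : complex.Re (z * z^*) = complex.Re z ^+ 2 + complex.Im z ^+ 2.
Proof. by case: z => a b /=; rewrite mulrN opprK !expr2. Qed.

Lemma innerE (f g : vec) : inner f g = (f *m adj g) 0 0.
Proof. by rewrite /inner !mxE; apply: eq_bigr => k _; rewrite !mxE. Qed.

Lemma cc (x : C) : x^*^* = x.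
Proof. by case: x => a b; rewrite /= /Num.conj /= opprK. Qed.

Lemma inner_conj (f g : vec) : (inner f g)^* = inner g f.
Proof.
rewrite /inner rmorph_sum; apply: eq_bigr => k _.
by rewrite rmorphM /= cc mulrC.
Qed.

Lemma inner_self_ge0 (f : vec) : 0 <= complex.Re (inner f f).
Proof.
rewrite /inner Re_sum; apply: sumr_ge0 => k _.
by rewrite ReJ addr_ge0 // sqr_ge0.
Qed.

Lemma inner_self_eq0 (f : vec) : complex.Re (inner f f) = 0 -> f = 0.
Proof.
rewrite /inner Re_sum => /eqP; rewrite psumr_eq0; last first.
  by move=> k _; rewrite ReJ addr_ge0 // sqr_ge0.
move=> /allP H; apply/rowP => k; rewrite mxE.
have := H k (mem_index_enum _); rewrite ReJ paddr_eq0 ?sqr_ge0 //.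
rewrite !sqrf_eq0 => /andP[/eqP Ha /eqP Hb].
by case: (f 0 k) Ha Hb => a b /= -> ->.
Qed.

Lemma vnorm_ge0 (f : vec) : 0 <= vnorm f.
Proof. exact: sqrtr_ge0. Qed.

Lemma vnorm_sqr (f : vec) : vnorm f ^+ 2 = complex.Re (inner f f).
Proof. by rewrite /vnorm sqr_sqrtr // inner_self_ge0. Qed.

Lemma innerDl (f g h : vec) : inner (f + g) h = inner f h + inner g h.
Proof. by rewrite /inner -big_split; apply: eq_bigr => k _; rewrite !mxE mulrDl. Qed.

Lemma innerDr (f g h : vec) : inner h (f + g) = inner h f + inner h g.
Proof. by rewrite /inner -big_split; apply: eq_bigr => k _; rewrite !mxE rmorphD mulrDr. Qed.

Lemma inner0r (f : vec) : inner f 0 = 0.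
Proof. by rewrite /inner big1 // => k _; rewrite mxE rmorph0 mulr0. Qed.

Lemma inner0l (f : vec) : inner 0 f = 0.
Proof. by rewrite /inner big1 // => k _; rewrite mxE mul0r. Qed.

Lemma sum_inner_scale N (A B : 'I_N -> vec) (f : vec) :
  \sum_(i < N) inner f (A i) *: B i = f *m \sum_(i < N) adj (A i) *m B i.
Proof.
rewrite mulmx_sumr; apply: eq_bigr => i _.
by rewrite mulmxA [f *m adj _]mx11_scalar mul_scalar_mx innerE.
Qed.

End Aux.

Lemma tangent_powR (R : realType) (w K q : R) : 0 <= w -> 0 <= K -> 1 < q ->
  K `^ q + q * K `^ (q - 1) * (w - K) <= w `^ q.
Proof.
move=> w0 K0 q1.
have q0 : 0 < q by rewrite (lt_trans _ q1).
have q10 : 0 < q - 1 by rewrite subr_gt0.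
set q' := q / (q - 1).
have q'0 : 0 < q' by rewrite divr_gt0.
have Hs : q^-1 + q'^-1 = 1.
  rewrite /q' invf_div; field; rewrite ?gt_eqF //.
set b := K `^ (q - 1).
have := conjugate_powR w0 (powR_ge0 K (q - 1)) q0 q'0 Hs.
rewrite -/b -powRrM.
have -> : (q - 1) * q' = q by rewrite /q' mulrC -mulrA mulVf ?mulr1 // gt_eqF.
move=> Y.
have Y' : q * (w * b) <= w `^ q + (q - 1) * K `^ q.
  have -> : w `^ q + (q - 1) * K `^ q = q * (w `^ q / q + K `^ q / q').
    rewrite /q'; field; rewrite ?gt_eqF //.
  by rewrite ler_wpM2l // ltW.
have HK : K * b = K `^ q by rewrite /b mulr_powRB1.
have -> : K `^ q + q * b * (w - K) = q * (w * b) - (q - 1) * (K * b).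
  rewrite -HK; ring.
by rewrite HK lerBlDr.
Qed.

Section Main.
Variables (R : realType) (n N : nat) (F : 'I_N -> 'rV[R[i]]_n).
Local Notation C := (R[i]).
Local Notation vec := 'rV[C]_n.

Lemma inner_suml I (r : seq I) (P : pred I) (A : I -> vec) (g : vec) :
  inner (\sum_(i <- r | P i) A i) g = \sum_(i <- r | P i) inner (A i) g.
Proof. exact: (big_morph _ (fun x y => innerDl x y g) (inner0l g)). Qed.

Lemma innerZl (a : C) (f g : vec) : inner (a *: f) g = a * inner f g.
Proof. by rewrite /inner mulr_sumr; apply: eq_bigr => k _; rewrite !mxE mulrA. Qed.

Lemma frame_opE : frame_op F = \sum_(i < N) adj (F i) *m F i.
Proof. by []. Qed.

Lemma mulS (f : vec) : f *m frame_op F = \sum_(i < N) inner f (F i) *: F i.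
Proof. by rewrite sum_inner_scale. Qed.

Lemma frame_unit : is_frame F -> frame_op F \in unitmx.
Proof.
move=> [A [B [A0 [AB HF]]]].
rewrite -row_free_unit -kermx_eq0; apply/eqP/row_matrixP => j; rewrite row0.
set f := row j _.
have Hf : f *m frame_op F = 0 by rewrite /f -row_mul mulmx_ker row0.
have H0 : \sum_(i < N) abs2 (inner f (F i)) = 0.
  have := congr1 (fun v => complex.Re (inner v f)) Hf.
  rewrite /= inner0l mulS inner_suml Re_sum => E.
  rewrite -[RHS]/(complex.Re (0:C)) -E.
  by apply: eq_bigr => i _; rewrite innerZl -[inner (F i) f]inner_conj.
have [Hl _] := HF f.
rewrite H0 in Hl.
have : vnorm f ^+ 2 <= 0.
  by rewrite -(pmulr_rle0 _ A0).
rewrite vnorm_sqr => Hle.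
apply: inner_self_eq0; apply/eqP; rewrite eq_le Hle inner_self_ge0 //.
Qed.

Lemma canonical_dual_is_dual : is_frame F -> is_dual F (canonical_dual F).
Proof.
move=> HF f; rewrite /canonical_dual.
have -> : \sum_(i < N) inner f (F i) *: (F i *m invmx (frame_op F)) =
   (\sum_(i < N) inner f (F i) *: F i) *m invmx (frame_op F).
  by rewrite mulmx_suml; apply: eq_bigr => i _; rewrite scalemxAl.
by rewrite -mulS mulmxK // frame_unit.
Qed.

Lemma dual_sum1 (G : 'I_N -> vec) : is_dual F G ->
  \sum_(i < N) adj (F i) *m G i = 1%:M.
Proof.
move=> HG; apply/row_matrixP => j.
by rewrite rowE -sum_inner_scale -HG row1.
Qed.

End Main.

Section Thm.
Variables (R : realType) (n N : nat) (F : 'I_N -> 'rV[R[i]]_n).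
Local Notation C := (R[i]).
Local Notation vec := 'rV[C]_n.
Hypothesis HF : is_frame F.
Variable G : 'I_N -> vec.
Hypothesis HG : is_dual F G.
Local Notation u := (canonical_dual F).
Definition hh i := G i - u i.

Lemma GE i : G i = u i + hh i.
Proof. by rewrite /hh addrC subrK. Qed.

Lemma M0 : \sum_(i < N) adj (F i) *m hh i = 0.
Proof.
under eq_bigr => i _ do rewrite mulmxBr.
by rewrite sumrB !dual_sum1 ?subrr //; exact: canonical_dual_is_dual.
Qed.

Lemma M0' : \sum_(i < N) adj (hh i) *m F i = 0.
Proof.
apply/matrixP => j k.
have E := congr1 (fun M : 'M[C]_n => (M k j)^*) M0.
rewrite /= summxE rmorph_sum mxE rmorph0 in E.
rewrite summxE (_ : (0 : 'M[C]_n) j k = 0) ?mxE //; apply: (etrans _ E); apply: eq_bigr => i _.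
by rewrite !mxE !big_ord1 !mxE rmorphM /= cc mulrC.
Qed.

Lemma inner_h_vanish (y : vec) : \sum_(i < N) inner y (hh i) *: F i = 0.
Proof. by rewrite sum_inner_scale M0' mulmx0. Qed.


Hypothesis Hcap : (span_of F (eta1 F) :&: span_of F (eta2 F) <= (0 : 'M[C]_n))%MS.
Hypothesis Hind : lin_indep_on F (eta2 F).

Lemma h_eta2 i : i \in eta2 F -> hh i = 0.
Proof.
move=> Hi; set y := hh i; pose a := fun j => inner y (hh j).
have E := inner_h_vanish y.
rewrite (bigID (fun j => j \in eta1 F)) /= in E.
set v1 := \sum_(j | j \in eta1 F) _ in E.
set v2 := \sum_(j | ~~ (j \in eta1 F)) _ in E.
have e2 : v2 = \sum_(j in eta2 F) a j *: F j.
  by apply: eq_bigl => j; rewrite /eta2 finset.in_setC.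
have Hv2 : (v2 <= span_of F (eta2 F))%MS.
  rewrite e2 /span_of; apply: summx_sub_sums => j _; apply: scalemx_sub.
  by rewrite genmxE.
have Hv1 : (v2 <= span_of F (eta1 F))%MS.
  have -> : v2 = - v1 by apply/eqP; rewrite -addr_eq0 addrC E.
  rewrite -scaleN1r; apply: scalemx_sub.
  rewrite /span_of; apply: summx_sub_sums => j _; apply: scalemx_sub.
  by rewrite genmxE.
have v20 : v2 = 0.
  apply/eqP; rewrite -submx0; apply: submx_trans Hcap.
  by rewrite sub_capmx Hv1 Hv2.
have Hai : a i = 0 by apply: (Hind (a:=a)) Hi; rewrite -e2.
by apply: inner_self_eq0; rewrite -/y; move: Hai; rewrite /a => ->.
Qed.


Lemma tr_sum (A : 'I_N -> 'M[C]_n) : \tr (\sum_(i < N) A i) = \sum_(i < N) \tr (A i).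
Proof.
rewrite /mxtrace; under eq_bigr => k _ do rewrite summxE.
exact: exchange_big.
Qed.

Lemma adjM (f : vec) (M : 'M[C]_n) : adj (f *m M) = adj M *m adj f.
Proof. by rewrite /adj map_mxM trmx_mul. Qed.

Lemma sum_inner_hu : \sum_(i < N) inner (hh i) (u i) = 0.
Proof.
set P := adj (invmx (frame_op F)).
have E i : inner (hh i) (u i) = \tr (P *m (adj (F i) *m hh i)).
  rewrite innerE /canonical_dual adjM -/P mulmxA.
  transitivity (\tr (hh i *m P *m adj (F i))); first by rewrite /mxtrace big_ord1.
  by rewrite -mulmxA mxtrace_mulC !mulmxA.
rewrite (eq_bigr _ (fun i _ => E i)) -tr_sum -mulmx_sumr M0 mulmx0.
by rewrite /mxtrace big1 // => k _; rewrite mxE.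
Qed.

Lemma sum_eta1 : \sum_(i in eta1 F) vnorm (u i) ^+ 2 <= \sum_(i in eta1 F) vnorm (G i) ^+ 2.
Proof.
have S1 : \sum_(i in eta1 F) inner (hh i) (u i) = 0.
  have := sum_inner_hu; rewrite (bigID (fun j => j \in eta1 F)) /= [X in _ + X]big1 ?addr0 //.
  by move=> j Hj; rewrite h_eta2 ?inner0l // /eta2 finset.in_setC.
have S2 : \sum_(i in eta1 F) inner (u i) (hh i) = 0.
  rewrite (eq_bigr (fun i => (inner (hh i) (u i))^*)) => [|i _]; last by rewrite inner_conj.
  by rewrite -rmorph_sum S1 rmorph0.
have E i : vnorm (G i) ^+ 2 = vnorm (u i) ^+ 2 + (complex.Re (inner (hh i) (hh i))
   + complex.Re (inner (u i) (hh i) + inner (hh i) (u i))).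
  rewrite !vnorm_sqr GE innerDl !innerDr !ReD; ring.
rewrite [X in _ <= X](eq_bigr _ (fun i _ => E i)) big_split /= big_split /=.
rewrite -[X in _ <= _ + (_ + X)]Re_sum big_split /= S1 S2 addr0 /= addr0.
by rewrite lerDl; apply: sumr_ge0 => i _; exact: inner_self_ge0.
Qed.

End Thm.

Unset Implicit Arguments.

Theorem theorem3p2 (R : realType) (n N : nat) (F : 'I_N -> 'rV[R[i]]_n) :
  is_frame F ->
  (span_of F (eta1 F) :&: span_of F (eta2 F) <= (0 : 'M[R[i]]_n))%MS ->
  (exists c : R, 0 < c /\ forall i, i \in eta1 F -> vnorm (F i) = c) ->
  lin_indep_on F (eta2 F) ->
  forall p : R, 2 < p -> optimal_dual p F (canonical_dual F).
Proof.
move=> HF Hcap [c [c0 Hc]] Hind p p2; split; first exact: canonical_dual_is_dual.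
move=> G HG.
have p0 : 0 < p by rewrite (lt_trans _ p2).
set u := canonical_dual F.
have Hsum : \sum_(i < N) (vnorm (F i) * vnorm (u i)) `^ p <=
            \sum_(i < N) (vnorm (F i) * vnorm (G i)) `^ p.
  rewrite (bigID (fun i => i \in eta1 F)) [X in _ <= X](bigID (fun i => i \in eta1 F)) /=.
  apply: lerD; last first.
    apply: ler_sum => i Hi.
    rewrite (GE F G i) (h_eta2 HF HG Hcap Hind) ?addr0 //.
    by rewrite /eta2 finset.in_setC.
  set q := p / 2.
  have q1 : 1 < q by rewrite /q ltr_pdivlMr // mul1r.
  have q0 : 0 < q by rewrite (lt_trans _ q1).
  have sqp x : 0 <= x -> x `^ p = (x ^+ 2) `^ q.
    move=> x0; rewrite -powR_mulrn // -powRrM; congr (_ `^ _).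
    by rewrite /q mulrC divfK // pnatr_eq0.
  set L := Lmax F.
  have HL i : i \in eta1 F -> vnorm (F i) * vnorm (u i) = L.
    by rewrite inE => /eqP.
  have step1 : \sum_(i in eta1 F) (vnorm (F i) * vnorm (u i)) `^ p =
               \sum_(i in eta1 F) (L ^+ 2) `^ q.
    apply: eq_bigr => i Hi.
    by rewrite sqp ?mulr_ge0 ?vnorm_ge0 // HL.
  rewrite step1.
  have Hdiff : 0 <= \sum_(i in eta1 F) ((vnorm (F i) * vnorm (G i)) ^+ 2 - L ^+ 2).
    have -> : \sum_(i in eta1 F) ((vnorm (F i) * vnorm (G i)) ^+ 2 - L ^+ 2) =
        c ^+ 2 * (\sum_(i in eta1 F) vnorm (G i) ^+ 2 - \sum_(i in eta1 F) vnorm (u i) ^+ 2).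
      rewrite mulrBr !mulr_sumr -sumrB; apply: eq_bigr => i Hi.
      rewrite -(HL i Hi) (Hc i Hi); ring.
    rewrite mulr_ge0 ?sqr_ge0 // subr_ge0; exact: (sum_eta1 HF HG Hcap Hind).
  apply: (@le_trans _ _ (\sum_(i in eta1 F) ((L ^+ 2) `^ q + q * (L ^+ 2) `^ (q - 1) *
        ((vnorm (F i) * vnorm (G i)) ^+ 2 - L ^+ 2)))).
    rewrite big_split /= -mulr_sumr lerDl mulr_ge0 // mulr_ge0 ?powR_ge0 //.
    exact: ltW.
  apply: ler_sum => i Hi; rewrite sqp ?mulr_ge0 ?vnorm_ge0 //.
  by apply: tangent_powR; rewrite ?sqr_ge0.
rewrite /AE1p; apply: ge0_ler_powR.
- by rewrite invr_ge0 ltW.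
- by rewrite nnegrE mulr_ge0 ?invr_ge0 // sumr_ge0 // => i _; rewrite powR_ge0.
- by rewrite nnegrE mulr_ge0 ?invr_ge0 // sumr_ge0 // => i _; rewrite powR_ge0.
- by rewrite ler_wpM2l ?invr_ge0.
Qed.
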